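(* Under the hypotheses of the preceding theorem (theorem:ConvergenceRatesSparsityFull), if moreover $1<p\le2$, then $\|c^\alpha-c^\ast\|=\mathcal{O}(\sqrt{\delta+\epsilon})$ as $\delta+\epsilon\to0$.
   Context: The hypotheses are: sparsity setting with $X,Y,Z$ Hilbert spaces, $B:X\times Y\to Z$ bilinear with $\|B(c,s)\|\le C\|c\|\|s\|$ and sequentially weak-weak continuous, $P:Y\to Y_n\subset Y$ linear bounded ($Y_n$ finite-dimensional), $s_{\mathrm{calib}}\in Y_n$, $\mathcal{R}_s:Y\to[0,\infty)$ proper convex weakly lower semi-continuous, $\{\varphi_i\}$ an orthonormal basis of $X$, $1\le w_i<\infty$, $\Phi_p(c)=\sum_iw_i|\langle c,\varphi_i\rangle|^p$, fixed $\gamma>0$, $\nu_1,\nu_2>0$, $\tilde{\mathcal{R}}(c,s)=\Phi_p(c)+\frac{\nu_2}{2}\|P(s)-s_{\mathrm{calib}}\|^2+\nu_1\mathcal{R}_s(s)$, $J^{u,s_m}_{\alpha,\beta,\mu}(c,s)=\frac12\|B(c,s)-u\|^2+\frac{\gamma}{2}\|s-s_m\|^2+\frac{\mu}{2}\|P(s)-s_{\mathrm{calib}}\|^2+\alpha\Phi_p(c)+\beta\mathcal{R}_s(s)$; $u^\ast=B(c^\ast,s^\ast)$ with $c^\ast\in\arg\min\{\Phi_p(c):B(c,s^\ast)=u^\ast\}$; $\|u^\ast-u_\delta\|\le\delta$, $\|s^\ast-s_{\mathrm{mod},\epsilon}\|\le\epsilon$; there exist $\kappa_1\in[0,1)$,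 $\kappa_2\ge0$, $0\le\kappa_3<\min\{1,\gamma/(2\alpha_{\max})\}$, $\xi^\ast\in\partial\tilde{\mathcal{R}}(c^\ast,s^\ast)$ with $\langle\xi^\ast,(c^\ast-c,s^\ast-s)\rangle\le\kappa_1D^{\xi^\ast}_{\tilde{\mathcal{R}}}((c,s),(c^\ast,s^\ast))+\kappa_2\|B(c,s)-B(c^\ast,s^\ast)\|+\kappa_3\|s-s^\ast\|^2$ for all $(c,s)$, where $D^{\xi}_{\mathcal{R}}(x,x^\ast)=\mathcal{R}(x)-\mathcal{R}(x^\ast)-\langle\xi,x-x^\ast\rangle$; $(c^\alpha,s^\alpha)$ minimizes $J^{u_\delta,s_{\mathrm{mod},\epsilon}}_{\alpha,\nu_1\alpha,\nu_2\alpha}$, $0<\alpha\le\alpha_{\max}$, and $m(\delta+\epsilon)\le\alpha\le M(\delta+\epsilon)$ for constants $0<m\le M$. *)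

(* Defs.v *)
From HB Require Import structures.
From mathcomp Require Import all_boot all_order all_algebra.
From mathcomp Require Import all_classical all_reals all_analysis.
Set Implicit Arguments. Unset Strict Implicit. Unset Printing Implicit Defensive.
Import Order.TTheory GRing.Theory Num.Theory numFieldNormedType.Exports.
Local Open Scope classical_set_scope.
Local Open Scope ring_scope.

Section Defs.
Variable R : realType.

Definition hnorm (V : lmodType R) (ip : V -> V -> R) (x : V) : R := Num.sqrt (ip x x).

Record hilbert (V : lmodType R) (ip : V -> V -> R) : Prop := Hilbert {
  ip_sym : forall x y, ip x y = ip y x;
  ip_linl : forall (a : R) x y z, ip (a *: x + y) z = a * ip x z + ip y z;
  ip_ge0 : forall x, 0 <= ip x x;
  ip_def : forall x, ip x x = 0 -> x = 0;
  ip_complete : forall u : nat -> V,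
    (forall e : R, 0 < e -> exists N, forall m n, (N <= m)%N -> (N <= n)%N ->
        hnorm ip (u m - u n) < e) ->
    exists l : V, forall e : R, 0 < e -> exists N, forall n, (N <= n)%N ->
        hnorm ip (u n - l) < e }.

Definition weak_cvg (V : lmodType R) (ip : V -> V -> R) (u : nat -> V) (x : V) :=
  forall y : V, (fun n => ip (u n) y) @ \oo --> (ip x y : R^o).

Definition bilinear_map (X Y Z : lmodType R) (B : X -> Y -> Z) :=
  (forall (a : R) c c' s, B (a *: c + c') s = a *: B c s + B c' s) /\
  (forall (a : R) c s s', B c (a *: s + s') = a *: B c s + B c s').

Definition seq_weak_weak_cont (X Y Z : lmodType R)
    (ipX : X -> X -> R) (ipY : Y -> Y -> R) (ipZ : Z -> Z -> R) (B : X -> Y -> Z) :=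
  forall (cn : nat -> X) (sn : nat -> Y) c s,
    weak_cvg ipX cn c -> weak_cvg ipY sn s -> weak_cvg ipZ (fun n => B (cn n) (sn n)) (B c s).

Definition linear_op (V W : lmodType R) (P : V -> W) :=
  forall (a : R) x y, P (a *: x + y) = a *: P x + P y.

Definition bounded_op (V W : lmodType R) (ipV : V -> V -> R) (ipW : W -> W -> R) (P : V -> W) :=
  exists K : R, forall x, hnorm ipW (P x) <= K * hnorm ipV x.

Definition finite_dim_subspace (V : lmodType R) (S : set V) :=
  exists (n : nat) (e : 'I_n -> V),
    S = [set y | exists a : 'I_n -> R, y = \sum_(i < n) a i *: e i].

Definition convex_fun (V : lmodType R) (f : V -> R) :=
  forall (t : R) x y, 0 <= t <= 1 -> f (t *: x + (1 - t) *: y) <= t * f x + (1 - t) * f y.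

Definition weakly_lsc (V : lmodType R) (ip : V -> V -> R) (f : V -> R) :=
  forall (u : nat -> V) x, weak_cvg ip u x ->
    ((f x)%:E <= limn_einf (fun n => (f (u n))%:E))%E.

Definition orthonormal_basis (V : lmodType R) (ip : V -> V -> R) (I : choiceType) (phi : I -> V) :=
  (forall i j, ip (phi i) (phi j) = if i == j then 1 else 0) /\
  (forall x, (forall i, ip x (phi i) = 0) -> x = 0).

Definition Phi_p (X : lmodType R) (ipX : X -> X -> R) (I : choiceType) (phi : I -> X)
    (w : I -> R) (p : R) (c : X) : \bar R :=
  \esum_(i in [set: I]) (w i * `| ipX c (phi i) | `^ p)%:E.

(* subgradient and Bregman distance of an extended-real functional on a Hilbert
   space, with the dual identified with the space through the inner product *)
Definition subgradient (V : lmodType R) (ip : V -> V -> R) (F : V -> \bar R) (xs xi : V) :=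
  F xs \is a fin_num /\ forall x, (F xs + (ip xi (x - xs))%:E <= F x)%E.

Definition bregman (V : lmodType R) (ip : V -> V -> R) (F : V -> \bar R) (xi x xs : V) : \bar R :=
  (F x - F xs - (ip xi (x - xs))%:E)%E.

Definition ip_prod (X Y : lmodType R) (ipX : X -> X -> R) (ipY : Y -> Y -> R)
    (a b : X * Y) : R := ipX a.1 b.1 + ipY a.2 b.2.

Definition Rtilde (X Y : lmodType R) (ipX : X -> X -> R) (ipY : Y -> Y -> R)
    (I : choiceType) (phi : I -> X) (w : I -> R) (p : R)
    (P : Y -> Y) (scal : Y) (Rs : Y -> R) (nu1 nu2 : R) (cs : X * Y) : \bar R :=
  (Phi_p ipX phi w p cs.1 +
   (nu2 / 2 * hnorm ipY (P cs.2 - scal) ^+ 2 + nu1 * Rs cs.2)%:E)%E.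

Definition Jfun (X Y Z : lmodType R) (ipX : X -> X -> R) (ipY : Y -> Y -> R)
    (ipZ : Z -> Z -> R) (B : X -> Y -> Z)
    (I : choiceType) (phi : I -> X) (w : I -> R) (p : R)
    (P : Y -> Y) (scal : Y) (Rs : Y -> R) (gamma : R)
    (u : Z) (sm : Y) (alpha beta mu : R) (cs : X * Y) : \bar R :=
  ((1 / 2 * hnorm ipZ (B cs.1 cs.2 - u) ^+ 2 + gamma / 2 * hnorm ipY (cs.2 - sm) ^+ 2
    + mu / 2 * hnorm ipY (P cs.2 - scal) ^+ 2 + beta * Rs cs.2)%:E
   + alpha%:E * Phi_p ipX phi w p cs.1)%E.

End Defs.

(* Main.v *)
Require Import Defs.
From HB Require Import structures.
From mathcomp Require Import all_boot all_order all_algebra.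
From mathcomp Require Import all_classical all_reals all_analysis.
From mathcomp Require Import ring lra.
Import Order.TTheory GRing.Theory Num.Theory numFieldNormedType.Exports.
Local Open Scope classical_set_scope.
Local Open Scope ring_scope.
Set Implicit Arguments. Unset Strict Implicit. Unset Printing Implicit Defensive.

Section Scalar.
Variable R : realType.
Implicit Types r v x y u p a K : R.

Lemma bern r v : 0 < r <= 1 -> 0 <= v -> v `^ r <= 1 + r * (v - 1).
Proof.
move=> /andP[r0 r1] v0.
have [->|rn1] := eqVneq r 1; first by rewrite powRr1 //; lra.
have r1' : r < 1 by rewrite lt_neqAle rn1.
have h := @conjugate_powR R (v `^ r) 1 (r^-1) ((1 - r)^-1) (powR_ge0 _ _) ler01.
have := h _ _ _.
rewrite invr_gt0 r0 invr_gt0 subr_gt0 r1' => /(_ isT isT).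
have e : r^-1^-1 + (1 - r)^-1^-1 = 1.
  rewrite (invrK r) (invrK (1 - r)); lra.
move=> /(_ e).
rewrite mulr1 powR1 -powRrM mulfV ?gt_eqF // powRr1 // (invrK r) (invrK (1-r)).
lra.
Qed.


Lemma h_arith r u w : 0 < r <= 1 -> 0 < u <= 2 -> 0 <= w ->
  w <= 1 + r * (u - 1) -> u <= (u + r * (1 - u)) * w ->
  r ^+ 2 / 2 * (u - 1) ^+ 2 <= u * w - 1 - (1 + r) * (u - 1).
Proof.
move=> /andP[r0 r1] /andP[u0 u2] w0 F1 F2.
have h1 : r * (u - 1) * (w - 1) <= u * w - 1 - (1 + r) * (u - 1) by nra.
apply: le_trans h1.
have [u1|u1] := lerP u 1.
  have H : r * (1 - u) <= 1 - w by nra.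
  have H2 : r * (1 - u) * (r * (1 - u)) <= r * (1 - u) * (1 - w).
    apply: ler_wpM2l => //; apply: mulr_ge0; lra.
  have : 0 <= (r * (1 - u)) ^+ 2 by apply: sqr_ge0.
  nra.
have pos : 0 < u + r * (1 - u) by nra.
have : r * (u - 1) <= (w - 1) * (u + r * (1 - u)) by nra.
move=> H.
have w1 : 0 <= w - 1 by nra.
have : r * (u - 1) <= (w - 1) * 2 by nra.
nra.
Qed.


Lemma powS r u : 0 <= u -> 0 < r -> u `^ (1 + r) = u * u `^ r.
Proof.
move=> u0 r0; rewrite -(mulr_powRB1 u0); first by rewrite addrAC subrr add0r.
lra.
Qed.

Lemma hpow r u : 0 < r <= 1 -> 0 <= u <= 2 ->
  r ^+ 2 / 2 * (u - 1) ^+ 2 <= u `^ (1 + r) - 1 - (1 + r) * (u - 1).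
Proof.
move=> /andP[r0 r1] /andP[u0 u2].
have [->|un0] := eqVneq u 0.
  rewrite powR0; last by apply/negP => /eqP; lra.
  have : r ^+ 2 <= r by nra.
  lra.
have u0' : 0 < u by rewrite lt_neqAle eq_sym un0.
rewrite powS //.
apply: h_arith => //; first (by apply/andP); first (by apply/andP); first exact: powR_ge0.
  by apply: bern => //; apply/andP.
have F : u^-1 `^ r <= 1 + r * (u^-1 - 1).
  by apply: bern; [apply/andP | rewrite invr_ge0 ltW].
have e : u^-1 `^ r * u `^ r = 1.
  by rewrite -powRM ?invr_ge0 ?mulVf ?gt_eqF ?powR1 //; lra.
have wg : 0 <= u `^ r by apply: powR_ge0.
have : 1 <= (1 + r * (u^-1 - 1)) * u `^ r.
  by rewrite -[X in X <= _]e; apply: ler_wpM2r.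
move=> H.
have : u * 1 <= u * ((1 + r * (u^-1 - 1)) * u `^ r) by rewrite ler_wpM2l // ltW.
have -> : u * ((1 + r * (u^-1 - 1)) * u `^ r) = (u + r * (1 - u)) * u `^ r.
  by field; rewrite gt_eqF.
by rewrite mulr1.
Qed.


Lemma Lp2 p a K : 0 < p <= 2 -> 0 <= a <= K -> 0 < K ->
  a ^+ 2 * K `^ p <= K ^+ 2 * a `^ p.
Proof.
move=> /andP[p0 p2] /andP[a0 aK] K0.
have [->|an0] := eqVneq a 0.
  by rewrite expr0n /= mul0r mulr_ge0 ?powR_ge0 ?sqr_ge0.
have a0' : 0 < a by rewrite lt_neqAle eq_sym an0.
set q := a / K.
have q0 : 0 < q by rewrite divr_gt0.
have q1 : q <= 1 by rewrite ler_pdivrMr // mul1r.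
have ea : a = q * K by rewrite /q divfK // gt_eqF.
have hq : q `^ 2 <= q `^ p.
  by apply: (ger_powR (introT andP (conj q0 q1))).
rewrite -(@natr1 R 1) -[1%:R + 1]/(2%:R) powR_mulrn in hq; last exact: ltW.
rewrite ea powRM ?(ltW q0) ?(ltW K0) //.
have kp : 0 <= K `^ p by apply: powR_ge0.
have : q ^+ 2 * K `^ p <= q `^ p * K `^ p by apply: ler_wpM2r.
move=> H.
rewrite exprMn.
have k2 : 0 <= K ^+ 2 by apply: sqr_ge0.
have H2 := ler_wpM2l k2 H.
have e : q ^+ 2 * K ^+ 2 * K `^ p = K ^+ 2 * (q ^+ 2 * K `^ p) by ring.
by rewrite e.
Qed.

Lemma same_case r K x y : 0 < r <= 1 -> 0 < K -> 0 <= x <= K -> 0 <= y <= K ->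
  r ^+ 2 / 4 * K `^ (1 + r) / K ^+ 2 * (x - y) ^+ 2 <=
  x `^ (1 + r) + y `^ (1 + r) - 2 * (2^-1 * (x + y)) `^ (1 + r).
Proof.
move=> /andP[r0 r1] K0 /andP[x0 xK] /andP[y0 yK].
have p0 : 1 + r != 0 by apply/negP => /eqP; lra.
set m := 2^-1 * (x + y).
have [m0|mn0] := eqVneq m 0.
  have x00 : x = 0 by move: m0; rewrite /m; lra.
  have y00 : y = 0 by move: m0; rewrite /m; lra.
  rewrite m0 x00 y00 !powR0 //; lra.
have m0 : 0 < m by rewrite lt_neqAle eq_sym mn0 /m; lra.
set u1 := x / m. set u2 := y / m.
have ex : x = u1 * m by rewrite /u1 divfK // gt_eqF.
have ey : y = u2 * m by rewrite /u2 divfK // gt_eqF.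
have u12 : u1 + u2 = 2.
  rewrite /u1 /u2 -mulrDl /m; field; apply/negP => /eqP H.
  by move: mn0; rewrite /m H mulr0 eqxx.
have u10 : 0 <= u1 by rewrite divr_ge0 // ltW.
have u20 : 0 <= u2 by rewrite divr_ge0 // ltW.
have u1le : u1 <= 2 by lra.
have u2le : u2 <= 2 by lra.
have rr : 0 < r <= 1 by apply/andP.
have h1 := @hpow r u1 rr (introT andP (conj u10 u1le)).
have h2 := @hpow r u2 rr (introT andP (conj u20 u2le)).
have mp0 : 0 <= m `^ (1 + r) by apply: powR_ge0.
have hs : m `^ (1 + r) * (r ^+ 2 / 2 * ((u1 - 1) ^+ 2 + (u2 - 1) ^+ 2)) <=
          m `^ (1 + r) * (u1 `^ (1 + r) + u2 `^ (1 + r) - 2).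
  apply: ler_wpM2l => //; rewrite mulrDr.
  have : (1 + r) * (u1 - 1) + (1 + r) * (u2 - 1) = 0.
    have -> : u2 = 2 - u1 by lra.
    ring.
  lra.
have ex' : x `^ (1 + r) = u1 `^ (1 + r) * m `^ (1 + r) by rewrite ex powRM // ltW.
have ey' : y `^ (1 + r) = u2 `^ (1 + r) * m `^ (1 + r) by rewrite ey powRM // ltW.
rewrite ex' ey'.
have pp : 0 < 1 + r <= 2 by apply/andP; split; lra.
have mK : 0 <= m <= K by apply/andP; split; rewrite /m; lra.
have L := @Lp2 (1 + r) m K pp mK K0.
have dxy : (x - y) ^+ 2 = 2 * m ^+ 2 * ((u1 - 1) ^+ 2 + (u2 - 1) ^+ 2).
  rewrite ex ey.
  have -> : u2 = 2 - u1 by lra.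
  ring.
rewrite dxy.
set S := (u1 - 1) ^+ 2 + (u2 - 1) ^+ 2.
have S0 : 0 <= S by rewrite /S addr_ge0 ?sqr_ge0.
set Kp := K `^ (1 + r). set Mp := m `^ (1 + r).
have e2 : Mp * (u1 `^ (1 + r) + u2 `^ (1 + r) - 2) =
   u1 `^ (1 + r) * Mp + u2 `^ (1 + r) * Mp - 2 * Mp by ring.
rewrite e2 in hs.
apply: le_trans hs.
have K2 : 0 < K ^+ 2 by rewrite exprn_gt0.
rewrite -subr_ge0.
have -> : Mp * (r ^+ 2 / 2 * S) - r ^+ 2 / 4 * Kp / K ^+ 2 * (2 * m ^+ 2 * S)
   = r ^+ 2 / 2 * S / K ^+ 2 * (K ^+ 2 * Mp - m ^+ 2 * Kp).
  by field; rewrite gt_eqF.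
apply: mulr_ge0; last by rewrite subr_ge0.
apply: divr_ge0; last exact: ltW.
apply: mulr_ge0 => //; apply: divr_ge0; [exact: sqr_ge0 | lra].
Qed.


Lemma mixed_aux r K s t : 0 < r <= 1 -> 0 < K -> 0 <= t <= s -> s <= K ->
  r / 8 * K `^ (1 + r) / K ^+ 2 * (s + t) ^+ 2 <=
  s `^ (1 + r) + t `^ (1 + r) - 2 * (2^-1 * (s - t)) `^ (1 + r).
Proof.
move=> rr K0 /andP[t0 ts] sK.
have [r0 r1] := andP rr.
have s0 : 0 <= s by lra.
have hm : (2^-1 * (s - t)) `^ (1 + r) <= (2^-1 * s) `^ (1 + r).
  apply: ge0_ler_powR; rewrite ?nnegrE; lra.
have h2 : 0 <= (2:R)^-1 by lra.
rewrite [X in _ <= X]powRM // in hm.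
have b := @bern r 2^-1 rr h2.
have e : (2:R)^-1 `^ (1 + r) = 2^-1 * (2^-1) `^ r by apply: powS.
rewrite e in hm.
have tp : 0 <= t `^ (1 + r) by apply: powR_ge0.
have sp : 0 <= s `^ (1 + r) by apply: powR_ge0.
have hr : 0 <= (2:R)^-1 `^ r by apply: powR_ge0.
have pp : 0 < 1 + r <= 2 by apply/andP; split; lra.
have L := @Lp2 (1 + r) s K pp (introT andP (conj s0 sK)) K0.
have st : (s + t) ^+ 2 <= 4 * s ^+ 2 by nra.
have K2 : 0 < K ^+ 2 by rewrite exprn_gt0.
set Kp := K `^ (1 + r) in L *.
set Sp := s `^ (1 + r) in L sp hm *.
have Kp0 : 0 <= Kp by apply: powR_ge0.
have step1 : r / 8 * Kp / K ^+ 2 * (s + t) ^+ 2 <= r / 2 * (s ^+ 2 * Kp) / K ^+ 2.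
  rewrite -subr_ge0.
  have -> : r / 2 * (s ^+ 2 * Kp) / K ^+ 2 - r / 8 * Kp / K ^+ 2 * (s + t) ^+ 2
     = r / 8 * Kp / K ^+ 2 * (4 * s ^+ 2 - (s + t) ^+ 2).
    by field; rewrite gt_eqF.
  apply: mulr_ge0; last lra.
  apply: divr_ge0; last exact: ltW.
  apply: mulr_ge0 => //; lra.
apply: le_trans step1 _.
have step2 : r / 2 * (s ^+ 2 * Kp) / K ^+ 2 <= r / 2 * Sp.
  rewrite ler_pdivrMr //; nra.

apply: le_trans step2 _.
have : 2 * ((2^-1 * 2^-1 `^ r) * Sp) <= (1 - r / 2) * Sp.
  have -> : 2 * ((2^-1 * 2^-1 `^ r) * Sp) = 2^-1 `^ r * Sp by field.
  apply: ler_wpM2r => //; lra.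
lra.
Qed.

Lemma mixed_case r K x y : 0 < r <= 1 -> 0 < K -> 0 <= x <= K -> - K <= y <= 0 ->
  r / 8 * K `^ (1 + r) / K ^+ 2 * (x - y) ^+ 2 <=
  `|x| `^ (1 + r) + `|y| `^ (1 + r) - 2 * `|2^-1 * (x + y)| `^ (1 + r).
Proof.
move=> rr K0 /andP[x0 xK] /andP[yK y0].
rewrite (ger0_norm x0) (ler0_norm y0).
have [tx|xt] := lerP (- y) x.
  rewrite ger0_norm; last lra.
  have := @mixed_aux r K x (- y) rr K0 (introT andP (conj (ltac:(lra) : 0 <= - y) tx)) xK.
  by rewrite opprK.
rewrite ler0_norm; last lra.
have := @mixed_aux r K (- y) x rr K0 (introT andP (conj x0 (ltW xt))) (ltac:(lra)).
have -> : - (2^-1 * (x + y)) = 2^-1 * (- y - x) by ring.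
have -> : (- y + x) ^+ 2 = (x - y) ^+ 2 by ring.
lra.
Qed.


Lemma scalar_main r K x y : 0 < r <= 1 -> 0 < K -> `|x| <= K -> `|y| <= K ->
  r ^+ 2 / 8 * K `^ (1 + r) / K ^+ 2 * (x - y) ^+ 2 <=
  `|x| `^ (1 + r) + `|y| `^ (1 + r) - 2 * `|2^-1 * (x + y)| `^ (1 + r).
Proof.
move=> rr K0 xK yK.
have [r0 r1] := andP rr.
have Kp0 : 0 <= K `^ (1 + r) by apply: powR_ge0.
have K2 : 0 < K ^+ 2 by rewrite exprn_gt0.
set Q := K `^ (1 + r) / K ^+ 2.
have Q0 : 0 <= Q by rewrite /Q divr_ge0 // ltW.
have d0 : 0 <= (x - y) ^+ 2 by apply: sqr_ge0.
have c1 : r ^+ 2 / 8 * K `^ (1 + r) / K ^+ 2 * (x - y) ^+ 2 <= r ^+ 2 / 4 * K `^ (1 + r) / K ^+ 2 * (x - y) ^+ 2.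
  rewrite -!(mulrA _ (K `^ (1 + r))) -/Q; apply: ler_wpM2r => //.
  apply: ler_wpM2r => //; nra.
have c2 : r ^+ 2 / 8 * K `^ (1 + r) / K ^+ 2 * (x - y) ^+ 2 <= r / 8 * K `^ (1 + r) / K ^+ 2 * (x - y) ^+ 2.
  rewrite -!(mulrA _ (K `^ (1 + r))) -/Q; apply: ler_wpM2r => //.
  apply: ler_wpM2r => //; nra.
move: xK yK; rewrite !ler_norml => /andP[xK1 xK2] /andP[yK1 yK2].
have [x0|x0] := lerP 0 x; have [y0|y0] := lerP 0 y.
- apply: le_trans c1 _.
  rewrite (ger0_norm x0) (ger0_norm y0) ger0_norm; last lra.
  apply: same_case => //; apply/andP; split; lra.
- apply: le_trans c2 _.
  apply: mixed_case => //; apply/andP; split; lra.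
- apply: le_trans c2 _.
  have -> : (x - y) ^+ 2 = (y - x) ^+ 2 by ring.
  rewrite (addrC x) (addrC (`|x| `^ (1 + r))).
  apply: mixed_case => //; apply/andP; split; lra.
- apply: le_trans c1 _.
  rewrite (ltr0_norm x0) (ltr0_norm y0) ltr0_norm; last lra.
  have -> : (x - y) ^+ 2 = (- x - - y) ^+ 2 by ring.
  have -> : - (2^-1 * (x + y)) = 2^-1 * (- x + - y) by ring.
  apply: same_case => //; apply/andP; split; lra.
Qed.

End Scalar.


Section Hil.
Variables (R : realType) (V : lmodType R) (ip : V -> V -> R) (hV : hilbert ip).
Local Notation N := (hnorm ip).

Lemma ip0l z : ip 0 z = 0.
Proof. have := ip_linl hV 1 0 0 z; rewrite scaler0 addr0 mul1r => h; lra. Qed.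
Lemma ipDl x y z : ip (x + y) z = ip x z + ip y z.
Proof. by have := ip_linl hV 1 x y z; rewrite scale1r mul1r. Qed.
Lemma ipZl a x z : ip (a *: x) z = a * ip x z.
Proof. by have := ip_linl hV a x 0 z; rewrite !addr0 ip0l addr0. Qed.
Lemma ipNl x z : ip (- x) z = - ip x z.
Proof. by rewrite -scaleN1r ipZl mulN1r. Qed.
Lemma ipBl x y z : ip (x - y) z = ip x z - ip y z.
Proof. by rewrite ipDl ipNl. Qed.
Lemma ip0r z : ip z 0 = 0.
Proof. by rewrite (ip_sym hV) ip0l. Qed.
Lemma ipDr x y z : ip z (x + y) = ip z x + ip z y.
Proof. by rewrite !(ip_sym hV z) ipDl. Qed.
Lemma ipZr a x z : ip z (a *: x) = a * ip z x.
Proof. by rewrite !(ip_sym hV z) ipZl. Qed.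
Lemma ipNr x z : ip z (- x) = - ip z x.
Proof. by rewrite !(ip_sym hV z) ipNl. Qed.
Lemma ipBr x y z : ip z (x - y) = ip z x - ip z y.
Proof. by rewrite !(ip_sym hV z) ipBl. Qed.

Lemma ip_suml (I : Type) (s : seq I) (F : I -> V) z :
  ip (\sum_(i <- s) F i) z = \sum_(i <- s) ip (F i) z.
Proof.
elim: s => [|a s IH]; first by rewrite !big_nil ip0l.
by rewrite !big_cons ipDl IH.
Qed.
Lemma ip_sumr (I : Type) (s : seq I) (F : I -> V) z :
  ip z (\sum_(i <- s) F i) = \sum_(i <- s) ip z (F i).
Proof.
rewrite (ip_sym hV) ip_suml; apply: eq_bigr => i _; exact: ip_sym.
Qed.

Lemma N_ge0 x : 0 <= N x.
Proof. exact: sqrtr_ge0. Qed.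
Lemma NE x : N x ^+ 2 = ip x x.
Proof. by rewrite /hnorm sqr_sqrtr // ip_ge0. Qed.

Lemma CS x y : ip x y ^+ 2 <= ip x x * ip y y.
Proof.
have [y0|yn0] := eqVneq (ip y y) 0.
  have -> : y = 0 by apply: (ip_def hV).
  by rewrite ip0r expr0n /= ip0r mulr0.
have yp : 0 < ip y y by rewrite lt_neqAle eq_sym yn0 ip_ge0.
set t := ip x y / ip y y.
have h := ip_ge0 hV (x - t *: y).
rewrite ipBl !ipBr !ipZl !ipZr (ip_sym hV y x) in h.
have e : ip x x - t * ip x y - (t * ip x y - t * (t * ip y y))
   = ip x x - ip x y ^+ 2 / ip y y by rewrite /t; field; rewrite gt_eqF.
rewrite e subr_ge0 ler_pdivrMr // in h.
Qed.

Lemma abs_ip x y : `|ip x y| <= N x * N y.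
Proof.
rewrite /hnorm -sqrtrM ?ip_ge0 // -sqrtr_sqr.
by apply: ler_wsqrtr; apply: CS.
Qed.

Lemma N_tri x y : N (x + y) <= N x + N y.
Proof.
have h : ip (x + y) (x + y) <= (N x + N y) ^+ 2.
  rewrite ipDl !ipDr (ip_sym hV y x) sqrrD !NE.
  have := abs_ip x y; rewrite ler_norml => /andP[_ h]; lra.
rewrite {1}/hnorm; apply: le_trans (ler_wsqrtr h) _.
by rewrite sqrtr_sqr ger0_norm // addr_ge0 // N_ge0.
Qed.

Lemma N_sym x y : N (x - y) = N (y - x).
Proof. by rewrite /hnorm -opprB ipNl ipNr opprK. Qed.

Lemma N_Z a x : N (a *: x) = `|a| * N x.
Proof. by rewrite /hnorm ipZl ipZr mulrA -expr2 sqrtrM ?sqr_ge0 // sqrtr_sqr. Qed.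

End Hil.


Section ONB.
Variables (R : realType) (V : lmodType R) (ip : V -> V -> R) (hV : hilbert ip).
Variables (I : choiceType) (phi : I -> V) (hphi : orthonormal_basis ip phi).
Local Notation N := (hnorm ip).

Definition co v i := ip v (phi i).
Definition Pv v (s : seq I) := \sum_(i <- s) co v i *: phi i.
Definition Sq v (s : seq I) := \sum_(i <- s) co v i ^+ 2.

Lemma ip_Pv_phi v s j : uniq s -> ip (Pv v s) (phi j) = if j \in s then co v j else 0.
Proof.
rewrite /Pv ip_suml //.
elim: s => [|a s IH]; first by rewrite big_nil.
rewrite big_cons /= => /andP[an us].
rewrite ipZl // hphi.1 IH // in_cons.
have [->|ja] := eqVneq j a.
  by rewrite (negbTE an) mulr1 addr0.
by rewrite mulr0 add0r.
Qed.

Lemma ip_Pv_Pv v s t : uniq s -> uniq t -> {subset s <= t} ->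
  ip (Pv v t) (Pv v s) = Sq v s.
Proof.
move=> us ut st; rewrite {2}/Pv ip_sumr // /Sq big_seq [RHS]big_seq.
by apply: eq_bigr => i si; rewrite ipZr // ip_Pv_phi // st // expr2.
Qed.

Lemma ip_v_Pv v s : ip v (Pv v s) = Sq v s.
Proof. by rewrite /Pv ip_sumr //; apply: eq_bigr => i _; rewrite ipZr // expr2. Qed.

Lemma Sq_ge0 v s : 0 <= Sq v s.
Proof. by apply: sumr_ge0 => i _; apply: sqr_ge0. Qed.

Lemma bessel v s : uniq s -> ip (v - Pv v s) (v - Pv v s) = ip v v - Sq v s.
Proof.
move=> us; rewrite ipBl // !ipBr // ip_v_Pv (ip_sym hV (Pv v s)) ip_v_Pv.
rewrite ip_Pv_Pv //; lra.
Qed.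

Lemma diffP v s t : uniq s -> uniq t -> {subset s <= t} ->
  ip (Pv v t - Pv v s) (Pv v t - Pv v s) = Sq v t - Sq v s.
Proof.
move=> us ut st; rewrite ipBl // !ipBr // (ip_sym hV (Pv v s) (Pv v t)).
rewrite !ip_Pv_Pv //; lra.
Qed.

Lemma Sq_sub v s t : uniq s -> uniq t -> {subset s <= t} -> Sq v s <= Sq v t.
Proof.
move=> us ut st; rewrite -subr_ge0 -diffP //; exact: ip_ge0.
Qed.

Lemma ip_res_phi v s j : uniq s -> ip (v - Pv v s) (phi j) = if j \in s then 0 else co v j.
Proof. by move=> us; rewrite ipBl // ip_Pv_phi //; case: ifP => _; rewrite ?subrr ?subr0. Qed.

Lemma N_phi j : N (phi j) = 1.
Proof. by rewrite /hnorm hphi.1 eqxx sqrtr1. Qed.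

End ONB.

Section Arch.
Variable R : realType.
Lemma arch (e : R) : 0 < e -> exists N : nat, forall n, (N <= n)%N -> 1 / n.+1%:R < e.
Proof.
move=> e0; exists (Num.truncn (e^-1)) => n Nn.
have h := truncnS_gt (e^-1).
have h2 : (Num.truncn e^-1).+1%:R <= n.+1%:R :> R by rewrite ler_nat.
have h3 : e^-1 < n.+1%:R by apply: lt_le_trans h h2.
rewrite div1r -(invrK e) ltf_pV2 ?posrE ?invr_gt0 //.
Qed.
Lemma sq_lt (a b : R) : 0 <= a -> 0 < b -> a ^+ 2 < b ^+ 2 -> a < b.
Proof. move=> a0 b0 h; nra. Qed.
End Arch.

Section Pars.
Variables (R : realType) (V : lmodType R) (ip : V -> V -> R) (hV : hilbert ip).
Variables (I : choiceType) (phi : I -> V) (hphi : orthonormal_basis ip phi).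
Local Notation N := (hnorm ip).
Local Notation co := (co ip phi).
Local Notation Pv := (Pv ip phi).
Local Notation Sq := (Sq ip phi).

Lemma esum_list c v l : uniq l -> 0 < c ->
  ((c * Sq v l)%:E <= \esum_(i in [set: I]) (c * co v i ^+ 2)%:E)%E.
Proof.
move=> ul c0; apply: esum_ge; exists [set` l].
  by split; [exact: finite_seq | by []].
by rewrite -fsbig_seq // sumEFin lee_fin /Sq mulr_sumr.
Qed.

Lemma esum_approx c v e s : 0 < e ->
  \esum_(i in [set: I]) (c * co v i ^+ 2)%:E = s%:E ->
  exists l, uniq l /\ s - e < c * Sq v l.
Proof.
move=> e0 Es.
have : ((s - e)%:E < \esum_(i in [set: I]) (c * co v i ^+ 2)%:E)%E.
  by rewrite Es lte_fin; lra.
rewrite /esum => /ereal_sup_gt [y [A [finA _] <-] hy].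
exists (finite_support 0%E A (fun i => (c * co v i ^+ 2)%:E)); split => //.
by move: hy; rewrite sumEFin lte_fin /Sq mulr_sumr.
Qed.

Lemma parseval c v : 0 < c ->
  ((c * ip v v)%:E <= \esum_(i in [set: I]) (c * co v i ^+ 2)%:E)%E.
Proof.
move=> c0.
have S0 : (0 <= \esum_(i in [set: I]) (c * co v i ^+ 2)%:E)%E.
  by apply: esum_ge0 => i _; rewrite lee_fin mulr_ge0 ?sqr_ge0 ?ltW.
move: S0; case E: (\esum_(i in [set: I]) (c * co v i ^+ 2)%:E) => [s| |] S0 //;
  last by rewrite leey.
rewrite lee_fin leNgt; apply/negP => hlt.
have K1 : forall l, uniq l -> c * Sq v l <= s.
  by move=> l ul; have := esum_list v ul c0; rewrite E lee_fin.
have K2 : forall n : nat, exists l, uniq l /\ s / c - 1 / n.+1%:R < Sq v l.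
  move=> n.
  have e0 : 0 < c / n.+1%:R by rewrite divr_gt0.
  have [l [ul hl]] := esum_approx e0 E.
  exists l; split => //.
  have -> : s / c - 1 / n.+1%:R = (s - c / n.+1%:R) / c.
    by field; rewrite gt_eqF // gt_eqF // ltr_pwDl //.
  by rewrite ltr_pdivrMr // [Sq _ _ * c]mulrC.
have [F HF] := choice K2.
pose G := fix G n := if n is n'.+1 then undup (G n' ++ F n'.+1) else F 0%N.
have Gu : forall n, uniq (G n).
  by case => [|n] /=; [exact: (HF 0%N).1 | exact: undup_uniq].
have FG : forall n, {subset F n <= G n}.
  by case => [|n] //= i; rewrite mem_undup mem_cat => ->; rewrite orbT.
have GS : forall n, {subset G n <= G n.+1}.
  by move=> n i hi /=; rewrite mem_undup mem_cat hi.
have GG : forall n k, {subset G n <= G (n + k)%N}.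
  move=> n; elim => [|k IH]; first by rewrite addn0.
  by move=> i /IH; rewrite addnS; apply: GS.
have GGm : forall n m, (n <= m)%N -> {subset G n <= G m}.
  by move=> n m nm; rewrite -(subnKC nm); apply: GG.
pose q n := Sq v (G n).
have qup : forall n, q n <= s / c.
  by move=> n; rewrite ler_pdivlMr // mulrC; apply: K1.
have qlo : forall n, s / c - 1 / n.+1%:R < q n.
  move=> n; apply: lt_le_trans (HF n).2 _.
  exact: Sq_sub (HF n).1 (Gu n) (FG n).
pose u n := Pv v (G n).
have Cau : forall n m, (n <= m)%N -> ip (u m - u n) (u m - u n) < 1 / n.+1%:R.
  move=> n m nm; rewrite /u diffP //; last exact: GGm.
  have := qup m; have := qlo n; rewrite /q; move: (Sq v (G n)) (Sq v (G m)) (1 / n.+1%:R) (s / c) => a b z w; lra.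
have Cauchy : forall e : R, 0 < e -> exists N0, forall m n, (N0 <= m)%N -> (N0 <= n)%N ->
    N (u m - u n) < e.
  move=> e e0.
  have [N0 HN] := arch (exprn_gt0 2 e0).
  exists N0 => m n Nm Nn.
  have main : forall a b, (N0 <= a)%N -> (a <= b)%N -> N (u b - u a) < e.
    move=> a b Na ab.
    have h1 := Cau a b ab.
    have h2 := HN a Na.
    apply: sq_lt => //; first exact: N_ge0.
    rewrite NE //; move: h1 h2; move: (ip (u b - u a) (u b - u a)) (1 / a.+1%:R) => z1 z2.
    lra.
  have [nm|mn] := leqP n m; first exact: main Nn nm.
  by rewrite (N_sym hV); apply: main Nm (ltnW mn).
have [ustar Hu] := ip_complete hV Cauchy.
have orth : forall j, ip (v - ustar) (phi j) = 0.
  move=> j.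
  set x := ip (v - ustar) (phi j).
  have key : forall e, 0 < e -> `|x| < e + e.
    move=> e e0.
    have [N1 H1] := Hu e e0.
    have [N2 H2] := arch (exprn_gt0 2 e0).
    set n := maxn N1 N2.
    have ex : x = ip (v - u n) (phi j) + ip (u n - ustar) (phi j).
      by rewrite -ipDl // addrA subrK.
    have b1 : `|ip (u n - ustar) (phi j)| < e.
      apply: le_lt_trans (abs_ip hV _ _) _.
      by rewrite (N_phi hphi) mulr1; apply: H1; rewrite leq_maxl.
    have b2 : `|ip (v - u n) (phi j)| < e.
      rewrite /u ip_res_phi //; case: ifP => jG; first by rewrite normr0.
      have ujG : uniq (j :: G n) by rewrite /= jG Gu.
      have := K1 _ ujG.
      rewrite /Sq big_cons -/(Sq v (G n)) -/(q n) => h.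
      have h' : co v j ^+ 2 <= s / c - q n.
        by rewrite lerBrDr ler_pdivlMr // mulrC.
      have h2 := H2 n (leq_maxr _ _).
      have hq := qlo n.
      apply: sq_lt => //; rewrite real_normK ?num_real //.
      move: h' h2 hq; move: (co v j ^+ 2) (q n) (s / c) (1 / n.+1%:R) => z1 z2 z3 z4.
      lra.
    rewrite ex; apply: le_lt_trans (ler_normD _ _) _; lra.
  apply/eqP; apply/negP => /negP xn0.
  have xp : 0 < `|x| / 2 by rewrite divr_gt0 // normr_gt0.
  have := key _ xp; lra.
have w0 : v - ustar = 0 by apply: hphi.2.
have ue : ustar = v by apply/eqP; rewrite eq_sym -subr_eq0 w0.
set t0 := ip v v - s / c.
have t0p : 0 < t0.
  rewrite /t0 subr_gt0 ltr_pdivrMr // mulrC //.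
have [N1 H1] := Hu (Num.sqrt t0) (ltac:(by rewrite sqrtr_gt0)).
have := H1 N1 (leqnn _).
rewrite ue (N_sym hV).
have hb := bessel hV hphi v (Gu N1).
have h3 := NE hV (v - u N1).
have h4 := N_ge0 ip (v - u N1).
have h5 := qup N1.
have h6 : Num.sqrt t0 ^+ 2 = t0 by rewrite sqr_sqrtr // ltW.
have h7 := sqrtr_ge0 t0.
rewrite /u => hlt2.
rewrite /q /u in h5.
have : N (v - Pv v (G N1)) ^+ 2 < Num.sqrt t0 ^+ 2 by nra.
rewrite h6 h3 hb /t0; lra.
Qed.

End Pars.


Section PhiL.
Variables (R : realType) (V : lmodType R) (ip : V -> V -> R) (hV : hilbert ip).
Variables (I : choiceType) (phi : I -> V) (hphi : orthonormal_basis ip phi).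
Variables (w : I -> R) (hw : forall i, 1 <= w i) (p : R) (hp : 1 < p <= 2).
Local Notation Phi := (Phi_p ip phi w p).
Local Notation co := (co ip phi).

Lemma w_ge0 i : 0 <= w i.
Proof. by apply: le_trans (hw i); apply: ler01. Qed.

Lemma Phi_ge0 c : (0 <= Phi c)%E.
Proof.
apply: esum_ge0 => i _; rewrite lee_fin mulr_ge0 ?powR_ge0 //; exact: w_ge0.
Qed.

Lemma Phi_term c i : ((w i * `|co c i| `^ p)%:E <= Phi c)%E.
Proof.
apply: esum_ge; exists [set i]; first by split; [exact: finite_set1 | by []].
by rewrite fsbig_set1.
Qed.

Lemma Phi_coord c K : (Phi c <= K%:E)%E -> forall i, `|co c i| <= Num.max 1 K.
Proof.
move=> hK i.
have h := le_trans (Phi_term c i) hK; rewrite lee_fin in h.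
have h2 : `|co c i| `^ p <= K.
  apply: le_trans h; rewrite -{1}(mul1r (_ `^ p)); apply: ler_wpM2r.
    exact: powR_ge0.
  exact: hw.
have [x1|x1] := lerP `|co c i| 1.
  by rewrite le_max x1.
rewrite le_max; apply/orP; right; apply: le_trans h2.
apply: le1r_powR; [exact: ltW | case/andP: hp => hp1 _; exact: ltW].
Qed.

Lemma Phi_mid a b K : 0 < K -> (forall i, `|co a i| <= K) -> (forall i, `|co b i| <= K) ->
  (Phi (2^-1 *: (a + b)) + Phi (2^-1 *: (a + b)) +
   \esum_(i in [set: I]) ((p - 1) ^+ 2 / 8 * K `^ p / K ^+ 2 * co (a - b) i ^+ 2)%:E
   <= Phi a + Phi b)%E.
Proof.
move=> K0 ha hb.
have [hp1 hp2] := andP hp.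
have rr : 0 < p - 1 <= 1 by apply/andP; split; lra.
have ep : p = 1 + (p - 1) by ring.
have Cq0 : forall x, 0 <= (p - 1) ^+ 2 / 8 * K `^ p / K ^+ 2 * x ^+ 2.
  move=> x; apply: mulr_ge0; last exact: sqr_ge0.
  apply: divr_ge0; last by apply: ltW; rewrite exprn_gt0.
  apply: mulr_ge0; last exact: powR_ge0.
  apply: divr_ge0; [exact: sqr_ge0 | lra].
rewrite /Phi_p -!esumD; last 6 first.
- by move=> i _; rewrite lee_fin mulr_ge0 ?powR_ge0 ?w_ge0.
- by move=> i _; rewrite lee_fin mulr_ge0 ?powR_ge0 ?w_ge0.
- by move=> i _; rewrite adde_ge0 // lee_fin mulr_ge0 ?powR_ge0 ?w_ge0.
- by move=> i _; rewrite lee_fin.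
- by move=> i _; rewrite lee_fin mulr_ge0 ?powR_ge0 ?w_ge0.
- by move=> i _; rewrite lee_fin mulr_ge0 ?powR_ge0 ?w_ge0.
apply: le_esum => i _.
rewrite -!EFinD lee_fin.
have e1 : ip (2^-1 *: (a + b)) (phi i) = 2^-1 * (ip a (phi i) + ip b (phi i)).
  by rewrite ipZl // ipDl.
have e2 : ip (a - b) (phi i) = ip a (phi i) - ip b (phi i) by rewrite ipBl.
rewrite /co e1 e2.
have := scalar_main rr K0 (ha i) (hb i).
rewrite /co.
rewrite -!ep.
set D := `|ip a (phi i)| `^ p + `|ip b (phi i)| `^ p - 2 * `|2^-1 * (ip a (phi i) + ip b (phi i))| `^ p.
set Cq := (p - 1) ^+ 2 / 8 * K `^ p / K ^+ 2 * (ip a (phi i) - ip b (phi i)) ^+ 2.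
move=> hD.
have Cq1 : 0 <= Cq by apply: Cq0.
have wD : D <= w i * D.
  rewrite -{1}(mul1r D); apply: ler_wpM2r; [lra | exact: hw].
move: wD hD Cq1; rewrite /D.
move: (`|ip a (phi i)| `^ p) (`|ip b (phi i)| `^ p) (`|2^-1 * (ip a (phi i) + ip b (phi i))| `^ p) (w i) => A B M W.
move=> h1 h2 h3.
have : W * (A + B - 2 * M) = W * A + W * B - 2 * (W * M) by ring.
lra.
Qed.

End PhiL.


Section Arith.
Variable R : realType.
Implicit Types x y z : R.

Lemma sq_le0 (a b : R) : 0 <= a -> a <= b -> a ^+ 2 <= b ^+ 2 :> R.
Proof. move=> a0 ab; nra. Qed.

Lemma ar_phia (gamma m alpha h ra ta r0 t0 Ga Gs phia phis delta eps : R) :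
  0 < gamma -> 0 < m -> 0 < alpha -> 0 <= delta -> 0 <= eps -> h = delta + eps -> h < 1 ->
  m * h <= alpha -> 0 <= r0 <= delta -> 0 <= t0 <= eps -> 0 <= ra -> 0 <= ta -> 0 <= Ga ->
  1 / 2 * ra ^+ 2 + gamma / 2 * ta ^+ 2 + alpha * (Ga + phia) <=
  1 / 2 * r0 ^+ 2 + gamma / 2 * t0 ^+ 2 + alpha * (Gs + phis) ->
  phia <= (1 + gamma) / (2 * m) + Gs + phis.
Proof.
move=> g0 m0 a0 d0 e0 eh h1 mha /andP[r00 r0d] /andP[t00 t0e] ra0 ta0 Ga0 J.
have r0h : r0 ^+ 2 <= h ^+ 2 by rewrite eh; nra.
have t0h : t0 ^+ 2 <= h ^+ 2 by rewrite eh; nra.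
have h0 : 0 <= h by rewrite eh; lra.
have mh2 : m * h ^+ 2 <= alpha by nra.
have e1 : alpha * ((1 + gamma) / (2 * m)) - (1 + gamma) / 2 * h ^+ 2 =
    (1 + gamma) / (2 * m) * (alpha - m * h ^+ 2).
  by field; rewrite gt_eqF.
have e2 : 0 <= (1 + gamma) / (2 * m) * (alpha - m * h ^+ 2).
  by rewrite mulr_ge0 // ?subr_ge0 // divr_ge0 //; lra.
suff : alpha * phia <= alpha * ((1 + gamma) / (2 * m) + Gs + phis).
  by rewrite ler_pM2l.
have q1 : 0 <= gamma / 2 * ta ^+ 2 by rewrite mulr_ge0 ?sqr_ge0 //; lra.
have q2 : 0 <= 1 / 2 * ra ^+ 2 by rewrite mulr_ge0 ?sqr_ge0 //; lra.
have q3 : gamma / 2 * t0 ^+ 2 <= gamma / 2 * h ^+ 2 by rewrite ler_wpM2l //; lra.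
have q4 : 1 / 2 * r0 ^+ 2 <= 1 / 2 * h ^+ 2 by rewrite ler_wpM2l //; lra.
have q5 : 0 <= alpha * Ga by rewrite mulr_ge0 // ltW.
move: J e1 e2; rewrite !mulrDr.
have -> : (1 + gamma) / 2 * h ^+ 2 = 1 / 2 * h ^+ 2 + gamma / 2 * h ^+ 2 by ring.
lra.
Qed.

Lemma ar_core (alpha gamma k1 k2 k3 ka0 delta eps ra ta r0 t0 e f X Y L : R) :
  0 < alpha -> 0 < gamma -> 0 <= k1 < 1 -> 0 <= k2 -> 0 <= k3 ->
  alpha * k3 <= ka0 -> ka0 < gamma / 2 ->
  0 <= delta -> 0 <= eps -> 0 <= r0 <= delta -> 0 <= t0 <= eps ->
  0 <= ra -> 0 <= ta -> 0 <= e -> e <= ra + r0 -> 0 <= f -> f <= ta + t0 ->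
  1 / 2 * ra ^+ 2 + gamma / 2 * ta ^+ 2 + alpha * X <=
  1 / 2 * r0 ^+ 2 + gamma / 2 * t0 ^+ 2 + alpha * Y ->
  - L <= k1 * (X - Y - L) + (k2 * e + k3 * f ^+ 2) ->
  alpha * (1 - k1) * (X - Y - L) <=
  delta ^+ 2 / 2 + gamma / 2 * eps ^+ 2 + alpha * k2 * delta + (alpha * k2) ^+ 2 / 2
  + (ka0 + ka0 ^+ 2 / (gamma / 2 - ka0)) * eps ^+ 2.
Proof.
move=> a0 g0 /andP[k10 k11] k20 k30 kka kag d0 e0 /andP[r00 r0d] /andP[t00 t0e]
  ra0 ta0 ee0 eb f0 fb J S.
set D := X - Y - L.
set g1 := gamma / 2 - ka0.
have g10 : 0 < g1 by rewrite /g1 subr_gt0.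
set ka := alpha * k3.
have ka_0 : 0 <= ka by rewrite mulr_ge0 // ltW.
have S' : - (alpha * L) <= k1 * (alpha * D) + (alpha * k2 * e + ka * f ^+ 2).
  have := ler_wpM2l (ltW a0) S.
  have -> : alpha * (k1 * D + (k2 * e + k3 * f ^+ 2)) =
     k1 * (alpha * D) + (alpha * k2 * e + ka * f ^+ 2) by rewrite /ka; ring.
  by rewrite mulrN.
have eD : alpha * D = alpha * X - alpha * Y - alpha * L by rewrite /D; ring.
have A1 : alpha * k2 * e <= alpha * k2 * ra + alpha * k2 * delta.
  rewrite -mulrDr; apply: ler_wpM2l; first by rewrite mulr_ge0 // ltW.
  lra.
have A2 : ka * f ^+ 2 <= ka * (ta + eps) ^+ 2.
  apply: ler_wpM2l => //; apply: sq_le0 => //; lra.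
have A3 : ka * (ta + eps) ^+ 2 <= gamma / 2 * ta ^+ 2 + (ka0 + ka0 ^+ 2 / g1) * eps ^+ 2.
  have B1 : 2 * ka * ta * eps <= g1 * ta ^+ 2 + ka ^+ 2 / g1 * eps ^+ 2.
    rewrite -subr_ge0.
    have -> : g1 * ta ^+ 2 + ka ^+ 2 / g1 * eps ^+ 2 - 2 * ka * ta * eps =
       (g1 * ta - ka * eps) ^+ 2 / g1 by field; rewrite gt_eqF.
    by rewrite divr_ge0 ?sqr_ge0 // ltW.
  have B2 : ka ^+ 2 / g1 <= ka0 ^+ 2 / g1.
    rewrite ler_pM2r ?invr_gt0 //; apply: sq_le0 => //.
  have B3 : ka * ta ^+ 2 <= ka0 * ta ^+ 2 by apply: ler_wpM2r => //; apply: sqr_ge0.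
  have B4 : ka * eps ^+ 2 <= ka0 * eps ^+ 2 by apply: ler_wpM2r => //; apply: sqr_ge0.
  have B5 : ka ^+ 2 / g1 * eps ^+ 2 <= ka0 ^+ 2 / g1 * eps ^+ 2 by apply: ler_wpM2r => //; apply: sqr_ge0.
  have -> : ka * (ta + eps) ^+ 2 = ka * ta ^+ 2 + 2 * ka * ta * eps + ka * eps ^+ 2 by ring.
  have -> : (ka0 + ka0 ^+ 2 / g1) * eps ^+ 2 = ka0 * eps ^+ 2 + ka0 ^+ 2 / g1 * eps ^+ 2 by ring.
  have -> : gamma / 2 * ta ^+ 2 = ka0 * ta ^+ 2 + g1 * ta ^+ 2 by rewrite /g1; ring.
  lra.
have A4 : alpha * k2 * ra - ra ^+ 2 / 2 <= (alpha * k2) ^+ 2 / 2.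
  have : 0 <= (ra - alpha * k2) ^+ 2 by apply: sqr_ge0.
  lra.
have A5 : r0 ^+ 2 <= delta ^+ 2 by apply: sq_le0.
have A6 : t0 ^+ 2 <= eps ^+ 2 by apply: sq_le0.
have A7 : gamma / 2 * t0 ^+ 2 <= gamma / 2 * eps ^+ 2 by apply: ler_wpM2l => //; lra.
have -> : alpha * (1 - k1) * D = alpha * D - k1 * (alpha * D) by ring.
lra.
Qed.


Lemma ar_final (m M k1 k2 K1 gamma delta eps h alpha D : R) :
  0 < m -> m <= M -> 0 <= k1 < 1 -> 0 <= k2 -> 0 <= K1 -> 0 < gamma ->
  0 <= delta -> 0 <= eps -> h = delta + eps -> m * h <= alpha -> alpha <= M * h -> 0 < alpha ->
  alpha * (1 - k1) * D <=
  delta ^+ 2 / 2 + gamma / 2 * eps ^+ 2 + alpha * k2 * delta + (alpha * k2) ^+ 2 / 2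
  + K1 * eps ^+ 2 ->
  D <= (1 / 2 + gamma / 2 + K1 + M * k2 + M ^+ 2 * k2 ^+ 2 / 2) / (m * (1 - k1)) * h.
Proof.
move=> m0 mM /andP[k10 k11] k20 K10 g0 d0 e0 eh mha aMh a0 H.
have h0 : 0 < h.
  have : 0 < M * h by apply: lt_le_trans aMh.
  by rewrite pmulr_rgt0 //; apply: lt_le_trans mM.
set K3 := 1 / 2 + gamma / 2 + K1 + M * k2 + M ^+ 2 * k2 ^+ 2 / 2.
have dh2 : delta ^+ 2 <= h ^+ 2 by apply: sq_le0 => //; lra.
have eh2 : eps ^+ 2 <= h ^+ 2 by apply: sq_le0 => //; lra.
have ak : alpha * k2 <= M * h * k2 by apply: ler_wpM2r.
have ak0 : 0 <= alpha * k2 by rewrite mulr_ge0 // ltW.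
have ak2 : (alpha * k2) ^+ 2 <= (M * h * k2) ^+ 2 by apply: sq_le0.
have akd : alpha * k2 * delta <= M * h * k2 * h.
  apply: le_trans (_ : alpha * k2 * delta <= M * h * k2 * delta) _.
    by apply: ler_wpM2r.
  apply: ler_wpM2l; first by apply: le_trans ak.
  lra.
have gK : gamma / 2 * eps ^+ 2 <= gamma / 2 * h ^+ 2 by apply: ler_wpM2l => //; lra.
have KK : K1 * eps ^+ 2 <= K1 * h ^+ 2 by apply: ler_wpM2l.
have H2 : alpha * (1 - k1) * D <= K3 * h ^+ 2.
  apply: le_trans H _.
  have -> : K3 * h ^+ 2 = h ^+ 2 / 2 + gamma / 2 * h ^+ 2 + M * h * k2 * h
       + (M * h * k2) ^+ 2 / 2 + K1 * h ^+ 2 by rewrite /K3; ring.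
  lra.
have mk : 0 < m * (1 - k1) by rewrite mulr_gt0 // subr_gt0.
have [D0|D0] := lerP D 0.
  apply: le_trans D0 _; apply: mulr_ge0; last exact: ltW.
  apply: divr_ge0; last exact: ltW.
  have : 0 <= M * k2 by rewrite mulr_ge0 //; lra.
  have : 0 <= M ^+ 2 * k2 ^+ 2 / 2 by rewrite divr_ge0 // mulr_ge0 ?sqr_ge0.
  rewrite /K3; lra.
have H3 : m * h * (1 - k1) * D <= alpha * (1 - k1) * D.
  apply: ler_wpM2r; first exact: ltW.
  by apply: ler_wpM2r => //; lra.
have H4 : m * (1 - k1) * D * h <= K3 * h * h.
  have -> : m * (1 - k1) * D * h = m * h * (1 - k1) * D by ring.
  have -> : K3 * h * h = K3 * h ^+ 2 by ring.
  by apply: le_trans H3 H2.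
rewrite ler_pM2r // in H4.
by rewrite mulrAC ler_pdivlMr // (mulrC D).
Qed.

Lemma ar_split (cc Nsq xa xs La Lm Lb phis phim phia Ga Gs : R) :
  La = xa - xs -> Lm = 2^-1 * (xa + xs) - xs ->
  phis + Lm <= phim -> phim + phim + cc * Nsq <= phia + phis -> Gs + Lb <= Ga ->
  cc * Nsq <= (Ga + phia) - (Gs + phis) - (La + Lb).
Proof. move=> -> -> h1 h2 h3; lra. Qed.

End Arith.

Unset Implicit Arguments.
Lemma sq_le (R : realType) (a b : R) : 0 <= a -> a <= b -> a ^+ 2 <= b ^+ 2.
Proof. move=> a0 ab; nra. Qed.

Theorem mainTheorem13 (R : realType)
  (X Y Z : lmodType R) (ipX : X -> X -> R) (ipY : Y -> Y -> R) (ipZ : Z -> Z -> R)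
  (hX : hilbert ipX) (hY : hilbert ipY) (hZ : hilbert ipZ)
  (B : X -> Y -> Z) (hBbil : bilinear_map B) (CB : R)
  (hBbd : forall c s, hnorm ipZ (B c s) <= CB * hnorm ipX c * hnorm ipY s)
  (hBw : seq_weak_weak_cont ipX ipY ipZ B)
  (P : Y -> Y) (Yn : set Y) (hYn : finite_dim_subspace Yn)
  (hPlin : linear_op P) (hPbd : bounded_op ipY ipY P) (hPYn : forall y, Yn (P y))
  (scal : Y) (hscal : Yn scal)
  (Rs : Y -> R) (hRs0 : forall s, 0 <= Rs s) (hRsconv : convex_fun Rs)
  (hRslsc : weakly_lsc ipY Rs)
  (I : choiceType) (phi : I -> X) (hphi : orthonormal_basis ipX phi)
  (w : I -> R) (hw : forall i, 1 <= w i)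
  (p : R) (hp : 1 < p <= 2)
  (gamma nu1 nu2 : R) (hgamma : 0 < gamma) (hnu1 : 0 < nu1) (hnu2 : 0 < nu2)
  (cst : X) (sst : Y)
  (hcst : forall c : X, B c sst = B cst sst ->
     (Phi_p ipX phi w p cst <= Phi_p ipX phi w p c)%E)
  (alpha_max : R) (halpha_max : 0 < alpha_max)
  (k1 k2 k3 : R) (hk1 : 0 <= k1 < 1) (hk2 : 0 <= k2)
  (hk3 : 0 <= k3) (hk3a : k3 < 1) (hk3b : k3 < gamma / (2 * alpha_max))
  (xi : X * Y)
  (hxi : subgradient (ip_prod ipX ipY) (Rtilde ipX ipY phi w p P scal Rs nu1 nu2)
           (cst, sst) xi)
  (hsrc : forall (c : X) (s : Y),
     ((ip_prod ipX ipY xi ((cst, sst) - (c, s)))%:E <=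
        k1%:E * bregman (ip_prod ipX ipY) (Rtilde ipX ipY phi w p P scal Rs nu1 nu2)
                  xi (c, s) (cst, sst)
        + (k2 * hnorm ipZ (B c s - B cst sst) + k3 * hnorm ipY (s - sst) ^+ 2)%:E)%E)
  (m M : R) (hm : 0 < m) (hmM : m <= M) :
  exists (C eta : R), 0 < eta /\
    forall (delta eps : R) (ud : Z) (sm : Y) (alpha : R) (ca : X) (sa : Y),
      0 <= delta -> 0 <= eps -> delta + eps < eta ->
      hnorm ipZ (B cst sst - ud) <= delta ->
      hnorm ipY (sst - sm) <= eps ->
      0 < alpha -> alpha <= alpha_max ->
      m * (delta + eps) <= alpha -> alpha <= M * (delta + eps) ->
      (forall (c : X) (s : Y),
         (Jfun ipX ipY ipZ B phi w p P scal Rs gamma ud sm alpha (nu1 * alpha) (nu2 * alpha)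
            (ca, sa)
          <= Jfun ipX ipY ipZ B phi w p P scal Rs gamma ud sm alpha (nu1 * alpha) (nu2 * alpha)
            (c, s))%E) ->
      hnorm ipX (ca - cst) <= C * Num.sqrt (delta + eps).

Proof.
have [hp1 hp2] := andP hp.
have [hk1a hk1b] := andP hk1.
set Phi := Phi_p ipX phi w p.
set G := fun s => nu2 / 2 * hnorm ipY (P s - scal) ^+ 2 + nu1 * Rs s.
have G0 : forall s, 0 <= G s.
  by move=> s; rewrite /G addr_ge0 // mulr_ge0 ?sqr_ge0 ?hRs0 //; lra.
have [finR hsub] := hxi.
have Rte : forall c s, Rtilde ipX ipY phi w p P scal Rs nu1 nu2 (c, s) = (Phi c + (G s)%:E)%E.
  by [].
have Phis_fin : Phi cst \is a fin_num.
  by move: finR; rewrite Rte fin_numD => /andP[].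
set phis := fine (Phi cst).
have ePs : Phi cst = phis%:E by rewrite /phis fineK.
set Gs := G sst.
set Kphi := (1 + gamma) / (2 * m) + Gs + phis.
set Kc := Num.max 1 Kphi.
have Kc1 : 1 <= Kc by rewrite le_max lexx.
have Kc0 : 0 < Kc by apply: lt_le_trans Kc1; apply: ltr01.
set cc := (p - 1) ^+ 2 / 8 * Kc `^ p / Kc ^+ 2.
have cc0 : 0 < cc.
  rewrite /cc; apply: divr_gt0; last by rewrite exprn_gt0.
  apply: mulr_gt0; last by rewrite powR_gt0.
  apply: divr_gt0; last lra.
  by rewrite exprn_gt0 // subr_gt0.
set ka0 := alpha_max * k3.
have ka00 : 0 <= ka0 by rewrite mulr_ge0 // ltW.
have ka0g : ka0 < gamma / 2.
  have := hk3b; rewrite ltr_pdivlMr ?mulr_gt0 // => H.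
  rewrite /ka0; nra.
set g0 := gamma / 2 - ka0.
have g00 : 0 < g0 by rewrite /g0 subr_gt0.
set K1 := ka0 + ka0 ^+ 2 / g0.
have K10 : 0 <= K1 by rewrite /K1 addr_ge0 // divr_ge0 ?sqr_ge0 // ltW.
set K3 := 1 / 2 + gamma / 2 + K1 + M * k2 + M ^+ 2 * k2 ^+ 2 / 2.
have K30 : 0 <= K3.
  rewrite /K3; have : 0 <= M * k2 by rewrite mulr_ge0 //; lra.
  have : 0 <= M ^+ 2 * k2 ^+ 2 / 2 by rewrite divr_ge0 // mulr_ge0 ?sqr_ge0.
  lra.
set K2 := K3 / (m * (1 - k1)).
have K20 : 0 <= K2 by rewrite /K2 divr_ge0 // mulr_ge0 ?ltW // subr_gt0.
exists (Num.sqrt (K2 / cc)), 1; split; first exact: ltr01.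
move=> delta eps ud sm alpha ca sa hd he heta hud hsm ha0 hamax hma haM Jmin.
set h := delta + eps.
have h0 : 0 < h.
  have : 0 < M * h by apply: lt_le_trans haM.
  by rewrite pmulr_rgt0 //; apply: lt_le_trans hmM.
rewrite -/h in hma haM heta.
have J := Jmin cst sst.
rewrite /Jfun /= -/Phi ePs in J.
set ra := hnorm ipZ (B ca sa - ud) in J.
set ta := hnorm ipY (sa - sm) in J.
set r0 := hnorm ipZ (B cst sst - ud) in J hud.
set t0 := hnorm ipY (sst - sm) in J hsm.
have Phia0 : (0 <= Phi ca)%E by apply: Phi_ge0.
move: J Phia0; case Ea: (Phi ca) => [phia | | ] J Phia0 //; last first.
  move: J; rewrite mulry gtr0_sg // mul1e addey // leNgt => /negP; apply.
rewrite -!EFinM -!EFinD lee_fin in J.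
set Ga := G sa.
have J' : 1 / 2 * ra ^+ 2 + gamma / 2 * ta ^+ 2 + alpha * (Ga + phia) <=
          1 / 2 * r0 ^+ 2 + gamma / 2 * t0 ^+ 2 + alpha * (Gs + phis).
  have -> : 1 / 2 * ra ^+ 2 + gamma / 2 * ta ^+ 2 + alpha * (Ga + phia) =
     1 / 2 * ra ^+ 2 + gamma / 2 * ta ^+ 2 +
     nu2 * alpha / 2 * hnorm ipY (P sa - scal) ^+ 2 +
     nu1 * alpha * Rs sa + alpha * phia by rewrite /Ga /G; ring.
  have -> : 1 / 2 * r0 ^+ 2 + gamma / 2 * t0 ^+ 2 + alpha * (Gs + phis) =
     1 / 2 * r0 ^+ 2 + gamma / 2 * t0 ^+ 2 +
     nu2 * alpha / 2 * hnorm ipY (P sst - scal) ^+ 2 +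
     nu1 * alpha * Rs sst + alpha * phis by rewrite /Gs /G; ring.
  exact: J.
have r00 : 0 <= r0 by apply: N_ge0.
have t00 : 0 <= t0 by apply: N_ge0.
have ra0 : 0 <= ra by apply: N_ge0.
have ta0 : 0 <= ta by apply: N_ge0.
have Ga0 : 0 <= Ga by apply: G0.
have Gs0 : 0 <= Gs by apply: G0.
have r0b : 0 <= r0 <= delta by rewrite r00 hud.
have t0b : 0 <= t0 <= eps by rewrite t00 hsm.
have phiaK : phia <= Kphi := ar_phia hgamma hm ha0 hd he erefl heta hma r0b t0b ra0 ta0 Ga0 J'.
have phisK : phis <= Kphi.
  rewrite /Kphi -[X in X <= _]add0r lerD2r; apply: addr_ge0 => //.
  apply: divr_ge0; first by apply: addr_ge0; [exact: ler01 | exact: ltW].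
  by apply: mulr_ge0; [exact: ler0n | exact: ltW].
have hca : (Phi ca <= Kphi%:E)%E by rewrite Ea lee_fin.
have hcs : (Phi cst <= Kphi%:E)%E by rewrite ePs lee_fin.
have hba := Phi_coord (ip:=ipX) (phi:=phi) hw hp hca.
have hbs := Phi_coord (ip:=ipX) (phi:=phi) hw hp hcs.
have PM := Phi_mid hX hw hp Kc0 hba hbs.
have PS := parseval hX hphi (ca - cst) cc0.
set mid := 2^-1 *: (ca + cst) in PM.
set Es := esum _ _ in PS.
have Es0 : (0 <= Es)%E.
  apply: le_trans PS; rewrite lee_fin; apply: mulr_ge0; [exact: ltW | exact: ip_ge0].
have HD := hsub (mid, sst).
rewrite !Rte /ip_prod /= subrr ip0r // addr0 ePs in HD.
rewrite -/Phi -/cc -/Es in PM.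
move: HD PM; case Em: (Phi mid) => [phim| |] HD PM; last 2 first.
  2: by have := Phi_ge0 ipX phi hw p mid; rewrite -/Phi Em.
  move: PM; rewrite Ea ePs; case: (Es) Es0 => [r| |] //= _; rewrite leye_eq //.
rewrite -!EFinD lee_fin addrAC lerD2r in HD.
have HE := le_trans (leeD (lexx (phim%:E + phim%:E)) PS) PM.
rewrite Ea ePs -!EFinD lee_fin in HE.
have HC := hsub (cst, sa).
rewrite !Rte /ip_prod /= subrr ip0r // add0r ePs -!EFinD lee_fin -addrA lerD2l in HC.
have HS := hsrc ca sa.
rewrite /bregman !Rte Ea ePs /ip_prod /= in HS.
rewrite -!EFinD -?EFinM -?EFinD lee_fin in HS.
set La := ipX xi.1 (ca - cst) in HS.
set Lb := ipY xi.2 (sa - sst) in HS HC.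
have e1 : ipX xi.1 (cst - ca) + ipY xi.2 (sst - sa) = - (La + Lb).
  by rewrite -(opprB ca cst) -(opprB sa sst) ipNr // ipNr // opprD.
have e2 : phia + G sa - (phis + G sst) - (La + Lb) = (Ga + phia) - (Gs + phis) - (La + Lb).
  by rewrite /Ga /Gs; ring.
rewrite e1 e2 in HS.
set e := hnorm ipZ (B ca sa - B cst sst) in HS.
set f := hnorm ipY (sa - sst) in HS.
have eb : e <= ra + r0.
  rewrite /e /ra /r0 (N_sym hZ (B cst sst)).
  have -> : B ca sa - B cst sst = (B ca sa - ud) + (ud - B cst sst) by rewrite addrA subrK.
  exact: N_tri.
have fb : f <= ta + t0.
  rewrite /f /ta /t0 (N_sym hY sst).
  have -> : sa - sst = (sa - sm) + (sm - sst) by rewrite addrA subrK.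
  exact: N_tri.
have e0 : 0 <= e by apply: N_ge0.
have f0 : 0 <= f by apply: N_ge0.
have kka : alpha * k3 <= ka0 by rewrite /ka0; apply: ler_wpM2r.
have core := ar_core ha0 hgamma hk1 hk2 hk3 kka ka0g hd he r0b t0b ra0 ta0 e0 eb f0 fb J' HS.
have fnl := ar_final hm hmM hk1 hk2 K10 hgamma hd he erefl hma haM ha0 core.
have eLa : La = ipX xi.1 ca - ipX xi.1 cst by rewrite /La ipBr.
have eLm : ipX xi.1 (mid - cst) = 2^-1 * (ipX xi.1 ca + ipX xi.1 cst) - ipX xi.1 cst.
  by rewrite /mid ipBr // ipZr // ipDr.
have spl := ar_split eLa eLm HD HE HC.
have fin := le_trans spl fnl.
rewrite -sqrtrM; last by rewrite divr_ge0 // ltW.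
rewrite /hnorm; apply: ler_wsqrtr.
by rewrite mulrAC ler_pdivlMr // mulrC.
Qed.
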